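(* Let $\kappa\neq0$ and let $S$ be a $\kappa$-cylindrical surface with directrix $\alpha=(x,z)$, where $(x,z,\theta)$ solves $x'=\cos\theta$, $z'=\sin\theta$, $\theta'=\kappa z$ on $\mathbb R$. Assume that $\alpha$ crosses the $x$-axis at $s=s_0$, i.e. $z(s_0)=0$. Then the curve $\alpha$ is symmetric with respect to the point $\alpha(s_0)$.
   Context: A $\kappa$-cylindrical surface ($\kappa\ne0$ constant) is a cylindrical ruled surface in $\mathbb R^3$ locally satisfying $\operatorname{div}\big(Du/\sqrt{1+|Du|^2}\big)=\kappa u$ (mean curvature equal to $\kappa z/2$). It has horizontal rulings and is of the form $(x(s),t,z(s))$, with arc-length directrix $\alpha=(x,z)$ and $\theta$ the angle between $\partial/\partial x$ and $\alpha'$, satisfying the system above. *)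

(* Defs.v *)
From Stdlib Require Import Reals.
From Coquelicot Require Import Coquelicot.
Open Scope R_scope.

Definition kappa_cyl_system (kappa : R) (x z theta : R -> R) : Prop :=
  forall s : R,
    is_derive x s (cos (theta s)) /\
    is_derive z s (sin (theta s)) /\
    is_derive theta s (kappa * z s).

Definition point_symmetric_about (x z : R -> R) (s0 : R) : Prop :=
  forall s : R,
    x (s0 + s) + x (s0 - s) = 2 * x s0 /\
    z (s0 + s) + z (s0 - s) = 2 * z s0.

(* Main.v *)
Require Import Defs.
From Stdlib Require Import Reals Lra.
From Coquelicot Require Import Coquelicot.
Open Scope R_scope.

Lemma deriv_cont f x l : is_derive f x l -> continuity_pt f x.
Proof. intros H. apply is_derive_Reals in H. apply derivable_continuous_pt. exists l; exact H. Qed.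

Lemma MVT_all (f df : R -> R) (a b : R) : (forall x, is_derive f x (df x)) -> exists c, f b - f a = df c * (b - a).
Proof.
  intros H. destruct (MVT_gen f a b df) as [c [_ Hc]].
  - intros; apply H.
  - intros; eapply deriv_cont; apply H.
  - exists c; exact Hc.
Qed.

Lemma sin_lip a b : Rabs (sin a - sin b) <= Rabs (a - b).
Proof.
  destruct (MVT_all sin cos b a) as [c Hc].
  - intros; apply is_derive_sin.
  - rewrite Hc, Rabs_mult. pose proof (Rabs_pos (a - b)).
    assert (Rabs (cos c) <= 1) by (apply Rabs_le; apply COS_bound).
    nra.
Qed.

Lemma refl_deriv (f : R -> R) (df s0 s : R) : is_derive f (2*s0 - s) df ->
  is_derive (fun t => f (2*s0 - t)) s (- df).
Proof.
  intros H.
  assert (Hi : is_derive (fun t => 2*s0 - t) s (-1)).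
  { auto_derive; auto; ring. }
  pose proof (is_derive_comp f (fun t => 2*s0 - t) s df (-1) H Hi) as Hc.
  replace (- df) with (scal (-1) df) by (unfold scal; simpl; unfold mult; simpl; ring).
  exact Hc.
Qed.

Lemma gronwall (E dE : R -> R) (L s0 : R) :
  (forall s, is_derive E s (dE s)) -> (forall s, 0 <= E s) ->
  (forall s, dE s <= L * E s) -> E s0 = 0 -> forall s, s0 <= s -> E s = 0.
Proof.
  intros HD Hpos Hb H0 s Hs.
  set (F := fun t => E t * exp (-(L*(t - s0)))).
  assert (HF : forall t, is_derive F t (exp (-(L*(t - s0))) * (dE t - L * E t))).
  { intros t. unfold F.
    assert (He : is_derive (fun t => exp (-(L*(t - s0)))) t (exp (-(L*(t - s0))) * (-L))).
    { auto_derive; auto; unfold Rminus; ring. }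
    pose proof (is_derive_mult E _ t _ _ (HD t) He) as Hm.
    replace (exp (-(L*(t - s0))) * (dE t - L * E t))
      with (plus (mult (dE t) (exp (-(L*(t - s0))))) (mult (E t) (exp (-(L*(t - s0))) * (-L)))).
    - apply Hm. intros; apply Rmult_comm.
    - unfold plus, mult; simpl. ring. }
  destruct (MVT_all F _ s0 s HF) as [c Hc].
  assert (HF0 : F s0 = 0) by (unfold F; rewrite H0; ring).
  assert (exp (-(L*(c - s0))) * (dE c - L * E c) <= 0).
  { pose proof (exp_pos (-(L*(c - s0)))). pose proof (Hb c). nra. }
  assert (F s <= 0) by nra.
  unfold F in H1. pose proof (exp_pos (-(L*(s - s0)))). pose proof (Hpos s). nra.
Qed.

Theorem mainTheorem3 (kappa : R) (x z theta : R -> R) (s0 : R) :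
  kappa <> 0 ->
  kappa_cyl_system kappa x z theta ->
  z s0 = 0 ->
  point_symmetric_about x z s0.
Proof.
  intros _ Hsys Hz0.
  set (u := fun s => z s + z (2*s0 - s)).
  set (v := fun s => theta s - theta (2*s0 - s)).
  set (E := fun s => u s ^ 2 + v s ^ 2).
  set (dE := fun s => 2 * u s * (sin (theta s) - sin (theta (2*s0 - s)))
                     + 2 * v s * (kappa * u s)).
  assert (HdE : forall s, is_derive E s (dE s)).
  { intros s.
    destruct (Hsys s) as [_ [Hzs Hts]].
    destruct (Hsys (2*s0 - s)) as [_ [Hzr Htr]].
    pose proof (refl_deriv _ _ s0 s Hzr) as Hz'.
    pose proof (refl_deriv _ _ s0 s Htr) as Ht'.
    assert (Hu : is_derive u s (sin (theta s) - sin (theta (2*s0 - s)))).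
    { unfold u. replace (sin (theta s) - sin (theta (2*s0 - s)))
        with (plus (sin (theta s)) (- sin (theta (2*s0 - s)))) by (unfold plus; simpl; ring).
      apply (is_derive_plus z (fun t => z (2*s0 - t))); auto. }
    assert (Hv : is_derive v s (kappa * u s)).
    { unfold v, u. replace (kappa * (z s + z (2*s0 - s)))
        with (plus (kappa * z s) (- - (kappa * z (2*s0 - s)))) by (unfold plus; simpl; ring).
      apply (is_derive_plus theta (fun t => - theta (2*s0 - t))); auto.
      apply (is_derive_opp (fun t => theta (2*s0 - t))); auto. }
    assert (Hp : forall y, is_derive (fun y : R => y ^ 2) y (2 * y)).
    { intros y. auto_derive; auto; ring. }
    pose proof (is_derive_comp (fun y : R => y ^ 2) u s _ _ (Hp (u s)) Hu) as Hu2.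
    pose proof (is_derive_comp (fun y : R => y ^ 2) v s _ _ (Hp (v s)) Hv) as Hv2.
    pose proof (is_derive_plus _ _ s _ _ Hu2 Hv2) as Hs.
    replace (dE s) with (plus (scal (sin (theta s) - sin (theta (2 * s0 - s))) (2 * u s))
      (scal (kappa * u s) (2 * v s))).
    - exact Hs.
    - unfold dE, plus, scal; simpl; unfold mult; simpl; ring. }
  set (L := 1 + Rabs kappa).
  assert (Hbnd : forall s, Rabs (dE s) <= L * E s).
  { intros s. unfold dE, E, L.
    pose proof (sin_lip (theta s) (theta (2*s0 - s))) as Hl.
    fold (v s) in Hl.
    set (a := u s) in *. set (b := v s) in *.
    set (d := sin (theta s) - sin (theta (2 * s0 - s))) in *.
    assert (H1 : Rabs (2 * a * d) <= a^2 + b^2).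
    { rewrite !Rabs_mult. rewrite (Rabs_right 2) by lra.
      pose proof (Rabs_pos a). pose proof (Rabs_pos d).
      assert (Rabs a * Rabs d <= Rabs a * Rabs b) by (apply Rmult_le_compat_l; auto).
      assert (2 * Rabs a * Rabs b <= a^2 + b^2).
      { pose proof (Rsqr_abs a) as Ha. pose proof (Rsqr_abs b) as Hb'.
        unfold Rsqr in Ha, Hb'. pose proof (pow2_ge_0 (Rabs a - Rabs b)).
        nra. }
      nra. }
    assert (H2 : Rabs (2 * b * (kappa * a)) <= Rabs kappa * (a^2 + b^2)).
    { rewrite !Rabs_mult. rewrite (Rabs_right 2) by lra.
      pose proof (Rabs_pos a). pose proof (Rabs_pos b). pose proof (Rabs_pos kappa).
      pose proof (Rsqr_abs a) as Ha. pose proof (Rsqr_abs b) as Hb'.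
      unfold Rsqr in Ha, Hb'.
      assert (2 * Rabs a * Rabs b <= a^2 + b^2).
      { pose proof (pow2_ge_0 (Rabs a - Rabs b)). nra. }
      nra. }
    pose proof (Rabs_triang (2 * a * d) (2 * b * (kappa * a))). nra. }
  assert (HE0 : E s0 = 0).
  { unfold E, u, v. replace (2*s0 - s0) with s0 by ring. rewrite Hz0. ring. }
  assert (Hpos : forall s, 0 <= E s).
  { intros s; unfold E. nra. }
  assert (HEz : forall s, E s = 0).
  { intros s. destruct (Rle_or_lt s0 s) as [Hs|Hs].
    - apply (gronwall E dE L s0); auto.
      intros t. pose proof (Hbnd t). pose proof (Rle_abs (dE t)). lra.
    - set (E' := fun t => E (2*s0 - t)).
      assert (HE'0 : E' s0 = 0) by (unfold E'; replace (2*s0 - s0) with s0 by ring; auto).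
      pose proof (gronwall E' (fun t => - dE (2*s0 - t)) L s0) as G.
      assert (E' (2*s0 - s) = 0).
      { apply G; auto.
        - intros t. apply refl_deriv. auto.
        - intros t; unfold E'; auto.
        - intros t. unfold E'. pose proof (Hbnd (2*s0 - t)).
          pose proof (Rle_abs (- dE (2*s0 - t))). rewrite Rabs_Ropp in H0. lra.
        - lra. }
      unfold E' in H. replace (2*s0 - (2*s0 - s)) with s in H by ring. exact H. }
  assert (Huv : forall s, u s = 0 /\ v s = 0).
  { intros s. pose proof (HEz s). unfold E in H. split; nra. }
  set (W := fun s => x s + x (2*s0 - s)).
  assert (HW : forall s, is_derive W s 0).
  { intros s. destruct (Hsys s) as [Hxs _]. destruct (Hsys (2*s0 - s)) as [Hxr _].
    pose proof (refl_deriv _ _ s0 s Hxr) as Hx'.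
    replace 0 with (plus (cos (theta s)) (- cos (theta (2*s0 - s)))).
    - apply (is_derive_plus x (fun t => x (2*s0 - t))); auto.
    - destruct (Huv s) as [_ Hv]. unfold v in Hv.
      replace (theta s) with (theta (2*s0 - s)) by lra. unfold plus; simpl; ring. }
  intros s. split.
  - destruct (MVT_all W (fun _ => 0) s0 (s0 + s) HW) as [c Hc].
    unfold W in Hc. replace (2*s0 - (s0+s)) with (s0 - s) in Hc by ring.
    replace (2*s0 - s0) with s0 in Hc by ring. lra.
  - destruct (Huv (s0 + s)) as [Hu _]. unfold u in Hu.
    replace (2*s0 - (s0+s)) with (s0 - s) in Hu by ring. rewrite Hz0. lra.
Qed.
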